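(* For $n\geq 0$ let \[ F_n=\sum_{T}\frac{(n+1)!}{2^n}\prod_{v\in T}\left(1+\frac{1}{h(v)}\right), \] the sum ranging over all binary trees $T$ with $n$ vertices (so $F_0=1$, the empty tree contributing an empty product). Then for every $n\geq 1$, \[ F_n=\frac{n+1}{2n}\sum_{k=0}^{n-1}\binom{n+1}{k+1}F_kF_{n-k-1}. \]
   Context: A binary tree is a rooted tree in which each vertex has a left subtree and a right subtree, each possibly empty; binary trees differing in whether a child is a left or a right child are distinct. For a vertex $v$ of a binary tree $T$, the hook length $h(v)$ is the number of descendants of $v$ in $T$, including $v$ itself. *)

(* Defs.v *)
From HB Require Import structures.
From mathcomp Require Import all_boot all_order all_algebra.
Set Implicit Arguments. Unset Strict Implicit. Unset Printing Implicit Defensive.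
Import Order.TTheory GRing.Theory Num.Theory.

Inductive btree : Type := BLeaf | BNode of btree & btree.

Fixpoint btree_eqb (s t : btree) : bool :=
  match s, t with
  | BLeaf, BLeaf => true
  | BNode l1 r1, BNode l2 r2 => btree_eqb l1 l2 && btree_eqb r1 r2
  | _, _ => false
  end.

Lemma btree_eqbP : Equality.axiom btree_eqb.
Proof.
elim=> [|l1 IHl r1 IHr] [|l2 r2] /=; try by constructor.
case: (IHl l2) => [->|H]; last by constructor; case.
case: (IHr r2) => [->|H]; last by constructor; case.
by constructor.
Qed.

HB.instance Definition _ := hasDecEq.Build btree btree_eqbP.

Fixpoint bsize (t : btree) : nat :=
  match t with BLeaf => 0 | BNode l r => (bsize l + bsize r).+1 end.

(* product over vertices v of (1 + 1/h(v)), h(v) = size of subtree rooted at v *)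
Fixpoint hookprod (t : btree) : rat :=
  match t with
  | BLeaf => 1
  | BNode l r => (1 + ((bsize t)%:R)^-1) * hookprod l * hookprod r
  end.

Fixpoint trees_ht (m : nat) : seq btree :=
  match m with
  | 0 => [:: BLeaf]
  | m'.+1 => BLeaf :: [seq BNode l r | l <- trees_ht m', r <- trees_ht m']
  end.

(* all binary trees with exactly n vertices, each listed once
   (a tree with n vertices has height <= n) *)
Definition trees (n : nat) : seq btree :=
  undup [seq t <- trees_ht n | bsize t == n].

Definition F (n : nat) : rat :=
  ((n.+1)`!)%:R / (2 ^ n)%:R * \sum_(t <- trees n) hookprod t.

(* Main.v *)
Require Import Defs.
From mathcomp Require Import all_boot all_order all_algebra.
From mathcomp Require Import zify ring.
Import Order.TTheory GRing.Theory Num.Theory.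
Local Open Scope ring_scope.

Fixpoint height (t : btree) : nat :=
  match t with BLeaf => 0 | BNode l r => (maxn (height l) (height r)).+1 end.

Lemma height_size t : (height t <= bsize t)%N.
Proof. elim: t => //= l IHl r IHr; lia. Qed.

Lemma mem_trees_ht m t : (t \in trees_ht m) = (height t <= m)%N.
Proof.
elim: m t => [|m IH] [|l r] //=.
rewrite in_cons /=.
apply/allpairsP/idP.
  by case=> [[l' r'] /= [Hl Hr [-> ->]]]; move: Hl Hr; rewrite !IH; lia.
move=> H; exists (l, r); rewrite /= !IH; split => //; lia.
Qed.

Lemma mem_trees n t : (t \in trees n) = (bsize t == n).
Proof.
rewrite /trees mem_undup mem_filter mem_trees_ht.
case: eqP => //= <-; exact: height_size.
Qed.

Lemma uniq_trees n : uniq (trees n).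
Proof. exact: undup_uniq. Qed.

Definition R (n : nat) : seq btree :=
  flatten [seq [seq BNode l r | l <- trees k, r <- trees (n - k)] | k <- iota 0 n.+1].

Lemma uniq_flat_key (A B : eqType) (key : B -> A) (s : seq A) (g : A -> seq B) :
  uniq s -> (forall x, uniq (g x)) -> (forall x y, y \in g x -> key y = x) ->
  uniq (flatten (map g s)).
Proof.
move=> + Ug Kg; elim: s => //= x s IH /andP [xs us].
rewrite cat_uniq Ug IH // andbT /=.
apply/hasP => [[y /flattenP [r /mapP [z zs ->] yz] yx]].
move: xs; rewrite -(Kg _ _ yx) (Kg _ _ yz) zs //.
Qed.

Definition lkey (t : btree) : nat := if t is BNode l _ then bsize l else 0.

Lemma uniq_R n : uniq (R n).
Proof.
apply: (@uniq_flat_key _ _ lkey); first exact: iota_uniq.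
  move=> k; apply: allpairs_uniq; try exact: uniq_trees.
  by move=> [a b] [c d] _ _ /= [-> ->].
by move=> k y /allpairsP [[l r] /= [Hl _ ->]]; move: Hl; rewrite mem_trees => /eqP.
Qed.

Lemma mem_R n t : (t \in R n) = (bsize t == n.+1).
Proof.
apply/flattenP/idP.
  move=> [s /mapP [k]]; rewrite mem_iota => Hk -> /allpairsP [[l r] /= [Hl Hr ->]].
  move: Hl Hr; rewrite !mem_trees /= => /eqP -> /eqP ->; lia.
case: t => [|l r] // /eqP [E].
exists [seq BNode l0 r0 | l0 <- trees (bsize l), r0 <- trees (n - bsize l)].
  apply: (map_f (fun k => [seq BNode l0 r0 | l0 <- trees k, r0 <- trees (n - k)])); rewrite mem_iota; lia.
apply: allpairs_f; rewrite mem_trees //; apply/eqP; lia.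
Qed.

Definition G (n : nat) : rat := \sum_(t <- trees n) hookprod t.

Lemma G_rec n : G n.+1 = (1 + (n.+1%:R)^-1) * \sum_(k < n.+1) G k * G (n - k)%N.
Proof.
rewrite /G (perm_big (R n)); last first.
  by apply: uniq_perm; [exact: uniq_trees | exact: uniq_R | move=> t; rewrite mem_R mem_trees].
rewrite /R big_flatten big_map -(big_mkord xpredT (fun k => G k * G (n - k)%N)).
rewrite /index_iota subn0 big_distrr /=; apply: eq_big_seq => k Hk.
have Hkn : (k <= n)%N by move: Hk; rewrite -[0%N :: _]/(iota 0 n.+1) mem_iota; lia.
rewrite big_allpairs_dep /G big_distrl /= big_distrr /=.
apply: eq_big_seq => l; rewrite mem_trees => /eqP Hl.
rewrite big_distrr /= big_distrr /=.
apply: eq_big_seq => r; rewrite mem_trees => /eqP Hr.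
rewrite /= Hl Hr -mulrA subnKC //; lia.
Qed.

Lemma term_eq m (k : nat) : (k <= m)%N ->
  ('C(m.+2, k.+1))%:R * F k * F (m.+1 - k - 1)%N =
  ((m.+2)`!)%:R / (2 ^ m)%:R * (G k * G (m - k)%N) :> rat.
Proof.
move=> Hk.
rewrite (_ : (m.+1 - k - 1 = m - k)%N); last by lia.
have H1 : ('C(m.+2, k.+1))%:R * ((k.+1)`!)%:R * (((m - k).+1)`!)%:R = ((m.+2)`!)%:R :> rat.
  rewrite -!natrM -mulnA -(bin_fact (_ : k.+1 <= m.+2)%N); last by lia.
  by rewrite (_ : (m.+2 - k.+1 = (m - k).+1)%N) //; lia.
have H2 : (2 ^ k)%:R * (2 ^ (m - k))%:R = (2 ^ m)%:R :> rat.
  by rewrite -natrM -expnD subnKC.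
have P1 : (2 ^ k)%:R != 0 :> rat by rewrite pnatr_eq0 -lt0n expn_gt0.
have P2 : (2 ^ (m - k))%:R != 0 :> rat by rewrite pnatr_eq0 -lt0n expn_gt0.
rewrite /F -/(G k) -/(G (m - k)%N) -H1 -H2.
field.
by rewrite P1 P2.
Qed.

Theorem mainTheorem2 (n : nat) : (1 <= n)%N ->
  F n = (n.+1)%:R / (2 * n)%:R *
        \sum_(k < n) ('C(n.+1, k.+1))%:R * F k * F (n - k - 1)%N.
Proof.
case: n => [|m] // _.
rewrite (eq_bigr (fun k : 'I_m.+1 => ((m.+2)`!)%:R / (2 ^ m)%:R * (G k * G (m - k)%N))); last first.
  by move=> k _; apply: term_eq; rewrite -ltnS.
rewrite -big_distrr /= /F -/(G m.+1) G_rec.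
set S := \sum_(_ < _) _.
have P1 : (2 ^ m)%:R != 0 :> rat by rewrite pnatr_eq0 -lt0n expn_gt0.
have P2 : (m.+1)%:R != 0 :> rat by rewrite pnatr_eq0.
rewrite expnS !natrM.
field.
by rewrite P1 addrC natr1.
Qed.
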